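(* Let $T$ be a DAT with duration vector $d$, let $v$ be a module of $T$, and let $T^v$, $\tilde v$, $d^v$ be as defined below. Then for every successful attack $\mathcal{O}$ on $T$ there exists a successful attack $\mathcal{O}'$ on $T^v$ with $\mathrm{t}(\mathcal{O}',d^v)\le\mathrm{t}(\mathcal{O},d)$.
   Context: A dynamic attack tree (DAT) is a finite rooted directed acyclic graph $T=(N,E)$ (edges point from a node to its children) with root $\mathrm{R}_T$, in which each node $v$ has a type $\gamma(v)\in\{\mathtt{BAS},\mathtt{OR},\mathtt{AND},\mathtt{SAND}\}$, with $\gamma(v)=\mathtt{BAS}$ if and only if $v$ is a leaf. Every node of type $\mathtt{SAND}$ comes with a fixed linear ordering $v_1,\dots,v_n$ of its children, written $v=\mathtt{SAND}(v_1,\dots,v_n)$; similarly one writes $v=\mathtt{OR}(v_1,\dots,v_n)$, $v=\mathtt{AND}(v_1,\dots,v_n)$. $N_\gamma$ denotes the set of nodes of type $\gamma$. For a node $v$, $T_v$ is the sub-DAG induced on the descendants of $v$ (all nodes reachable from $v$ by a directed path, including $v$), rooted at $v$, with the inherited types and orderings, and $B_v$ is the set of nodes of $T_v$ of type $\mathtt{BAS}$. A module of $T$ is a node $v\in N\setminus N_{\mathtt{BAS}}$ such that every directed path from a node outside $T_v$ to a node of $T_v$ passes through $v$; equivalently, every node of $T_v$ other than $v$ has all its parents inside $T_v$. An attack on $T$ is a pair $\mathcal{O}=(A,\prec)$ where $A\subseteq N_{\mathtt{BAS}}$ and $\prec$ is a strict partial order on $A$. An attack $(A,\prec)$ reaches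 a node $v$, defined recursively: if $v\in N_{\mathtt{BAS}}$, iff $v\in A$; if $v=\mathtt{OR}(v_1,\dots,v_n)$, iff it reaches some $v_i$; if $v=\mathtt{AND}(v_1,\dots,v_n)$, iff it reaches all $v_i$; if $v=\mathtt{SAND}(v_1,\dots,v_n)$, iff it reaches all $v_i$ and for every $i<n$, every $a\in A\cap B_{v_i}$ and every $a'\in A\cap B_{v_{i+1}}$ one has $a\prec a'$. An attack is successful if it reaches the root. A duration vector is $d\in\mathbb{R}_{\ge0}^{N_{\mathtt{BAS}}}$. For an attack $\mathcal{O}=(A,\prec)$, $\mathrm{t}(\mathcal{O},d)=\max_C\sum_{a\in C}d_a$, the maximum over all maximal chains $C$ of $(A,\prec)$ (equal to $0$ if $A=\varnothing$). The min time $\mathrm{mt}(T,d)$ is the minimum of $\mathrm{t}(\mathcal{O},d)$ over successful attacks $\mathcal{O}$ on $T$ ($\infty$ if there are none). For a module $v$: $T^v$ is the DAT obtained from $T$ by deleting all nodes of $T_v$ other than $v$ (with their incident edges) and turning $v$ into a new leaf $\tilde v$ of type $\mathtt{BAS}$ (keeping its incoming edges and its position in the child orderings of its $\mathtt{SAND}$-parents); $d^v$ is the duration vector on the BASes of $T^v$ given by $d^v_a=d_a$ for $a\in N_{\mathtt{BAS}}\setminus B_v$ and $d^v_{\tilde v}=\mathrm{mt}(T_v,d|_{B_v})$ (if this is $\infty$, then $\mathrm{t}(\mathcal{O},d^v)=\infty$ for any attack $\mathcal{O}$ containing $\tilde v$). *)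

(* Defs.v *)
From HB Require Import structures.
From mathcomp Require Import all_boot all_order all_algebra.
From mathcomp Require Import boolp constructive_ereal reals.

Set Implicit Arguments.
Unset Strict Implicit.
Unset Printing Implicit Defensive.
Import Order.TTheory GRing.Theory Num.Theory.

Inductive gate := BAS | OR | AND | SAND.

Definition is_bas (g : gate) : bool := if g is BAS then true else false.

(** A DAT over a finite node type N: a type for each node, the ordered list
    of children of each node (edges point from a node to its children; the
    order of the list is the linear ordering used by SAND nodes), and a root. *)
Record dat (N : finType) := DAT {
  ty : N -> gate;
  ch : N -> seq N;
  root : N }.

Section DAT.
Variable N : finType.
Implicit Types T : dat N.

Definition edge T : rel N := fun u w => w \in ch T u.

Definition desc T (v x : N) : bool := connect (edge T) v x.

Definition wf_dat T : Prop :=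
  [/\ (forall u w, w \in ch T u -> ~~ desc T w u),
      (forall u, uniq (ch T u)),
      (forall x, desc T (root T) x)
    & (forall u, ty T u = BAS <-> ch T u = [::])].

Definition Bset T (v : N) : {set N} := [set x | desc T v x & is_bas (ty T x)].

Definition is_module T (v : N) : Prop :=
  ty T v <> BAS /\
  forall x u, desc T v x -> x != v -> x \in ch T u -> desc T v u.

(** An attack (A, prec), prec given as a set of pairs (a, a') meaning a < a'. *)
Definition attack_t := ({set N} * {set N * N})%type.

Definition is_attack T (O : attack_t) : Prop :=
  [/\ (forall a, a \in O.1 -> ty T a = BAS),
      (forall a b, (a, b) \in O.2 -> (a \in O.1) && (b \in O.1)),
      (forall a, (a, a) \notin O.2)
    & (forall a b c, (a, b) \in O.2 -> (b, c) \in O.2 -> (a, c) \in O.2)].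

(** The attack O reaches node v (least fixed point of the recursive rules,
    which on a finite DAG coincides with the recursive definition). *)
Inductive reaches T (O : attack_t) : N -> Prop :=
| reaches_BAS v : ty T v = BAS -> v \in O.1 -> reaches T O v
| reaches_OR v w : ty T v = OR -> w \in ch T v -> reaches T O w ->
    reaches T O v
| reaches_AND v : ty T v = AND -> (forall w, w \in ch T v -> reaches T O w) ->
    reaches T O v
| reaches_SAND v : ty T v = SAND ->
    (forall w, w \in ch T v -> reaches T O w) ->
    (forall i, i.+1 < size (ch T v) -> forall a a',
        a \in O.1 -> a' \in O.1 ->
        a \in Bset T (nth v (ch T v) i) ->
        a' \in Bset T (nth v (ch T v) i.+1) ->
        (a, a') \in O.2) ->
    reaches T O v.

Definition successful T (O : attack_t) : Prop :=
  is_attack T O /\ reaches T O (root T).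

Definition is_chain (O : attack_t) (C : {set N}) : bool :=
  (C \subset O.1) &&
  [forall a in C, forall b in C,
     (a != b) ==> (((a, b) \in O.2) || ((b, a) \in O.2))].

Definition is_maxchain (O : attack_t) (C : {set N}) : bool :=
  is_chain O C &&
  [forall C' : {set N}, (is_chain O C' && (C \subset C')) ==> (C' == C)].

Local Open Scope ereal_scope.

(** t(O, d): maximum over maximal chains of the total duration (the empty
    set is the unique maximal chain when A is empty, giving 0). *)
Definition time {R : realDomainType} (O : attack_t) (d : N -> \bar R) : \bar R :=
  \big[maxe/-oo]_(C : {set N} | is_maxchain O C) \sum_(a in C) d a.

Definition mintime {R : realDomainType} T (d : N -> \bar R) : \bar R :=
  \big[mine/+oo]_(O : attack_t | `[< successful T O >]) time O d.

End DAT.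

Section Constructions.
Variables (N : finType) (T : dat N) (v : N).

Definition sub_node := {x : N | desc T v x}.

Definition sub_root : sub_node := exist _ v (connect0 (edge T) v).

Definition subdat : dat sub_node :=
  DAT (fun x : sub_node => ty T (val x))
      (fun x : sub_node => pmap insub (ch T (val x)))
      sub_root.

(** T^v: delete all nodes of T_v other than v; v becomes the leaf ~v of type
    BAS, keeping its incoming edges and its position in child orderings. *)
Definition quot_node := {x : N | (x == v) || ~~ desc T v x}.

Lemma vtilde_mem : (v == v) || ~~ desc T v v.
Proof. by rewrite eqxx. Qed.

Definition vtilde : quot_node := exist _ v vtilde_mem.

Definition quotdat : dat quot_node :=
  DAT (fun x : quot_node => if val x == v then BAS else ty T (val x))
      (fun x : quot_node => if val x == v then [::]
                            else pmap insub (ch T (val x)))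
      (insubd vtilde (root T)).

Definition dquot {R : realDomainType} (d : N -> R) : quot_node -> \bar R :=
  fun x => if val x == v then mintime subdat (fun y : sub_node => (d (val y))%:E)
           else (d (val x))%:E.

End Constructions.

Arguments dquot [N] T v {R} d _.

(* Main.v *)
Require Import Defs.
From HB Require Import structures.
From mathcomp Require Import all_boot all_order all_algebra.
From mathcomp Require Import boolp constructive_ereal reals.
Set Implicit Arguments.
Unset Strict Implicit.
Unset Printing Implicit Defensive.
Import Order.TTheory GRing.Theory Num.Theory.

Lemma connect_map (A B : finType) (f : A -> B) (e : rel A) (e' : rel B) :
  (forall x y, e x y -> e' (f x) (f y)) ->
  forall x y, connect e x y -> connect e' (f x) (f y).
Proof.
move=> H x y /connectP [p pth ->]; elim: p x pth => [|z p IH] x /=.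
  by rewrite connect0.
case/andP => exz pth; exact: connect_trans (connect1 (H _ _ exz)) (IH _ pth).
Qed.

Lemma desc_step (N : finType) (T : dat N) u x :
  desc T u x -> u != x -> exists2 w, w \in ch T u & desc T w x.
Proof.
case/connectP => [[|w p]] /=; first by move=> _ ->; rewrite eqxx.
case/andP => euw pth -> _; exists w => //; apply/connectP; by exists p.
Qed.

Lemma map_val_pmap (T : eqType) (P : pred T) (sT : subType P) (s : seq T) :
  all P s -> map val (pmap (insub : T -> option sT) s) = s.
Proof.
elim: s => //= x s IH /andP [Px Ps]; by rewrite insubT /= SubK IH.
Qed.

Lemma maxchain_ext (N : finType) (O : attack_t N) C0 :
  is_chain O C0 -> exists C, is_maxchain O C && (C0 \subset C).
Proof.
move=> hC0.
have P0 : is_chain O C0 && (C0 \subset C0) by rewrite hC0 subxx.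
case: (@arg_maxnP _ C0 (fun C => is_chain O C && (C0 \subset C)) (fun C : {set N} => #|C|) P0) => C /andP[hC sub] Hmax.
exists C; rewrite sub andbT /is_maxchain hC /=; apply/forallP => C'.
apply/implyP => /andP[hC' sCC'].
rewrite eq_sym eqEcard sCC' /=; apply: Hmax; by rewrite hC' (subset_trans sub sCC').
Qed.

Lemma chain_le_time (R : realDomainType) (N : finType) (O : attack_t N)
  (d : N -> R) C0 : is_chain O C0 -> (forall a, a \in O.1 -> (0 <= d a)%R) ->
  ((\sum_(a in C0) d a)%:E <= time O (fun a => (d a)%:E))%E.
Proof.
move=> hC0 hd; case: (maxchain_ext hC0) => C /andP[hC sub].
rewrite /time; apply: le_trans (le_bigmax_cond _ _ hC).
rewrite sumEFin lee_fin [X in (_ <= X)%R](big_setID C0) /=.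
set S1 := (X in (X + _)%R).
have -> : S1 = (\sum_(a in C0) d a)%R.
  rewrite /S1; apply: eq_bigl => i; rewrite !inE.
  by case: (boolP (i \in C0)) => [/(subsetP sub) -> | ]; rewrite ?andbF.
rewrite lerDl.
apply: sumr_ge0 => i; rewrite inE => /andP[_ iC].
apply: hd; move: hC => /andP[/andP[/subsetP sC _] _]; exact: sC.
Qed.
Section Main.
Variables (N : finType) (T : dat N) (v : N).
Hypothesis wfT : wf_dat T.
Hypothesis modv : is_module T v.
Variable O : attack_t N.
Hypothesis attO : is_attack T O.

Definition Av := [set y in O.1 | desc T v y].
Definition rv := `[< reaches T O v >].
Definition O1q : {set quot_node T v} :=
  [set x | if val x == v then rv else val x \in O.1].
Definition O2q : {set quot_node T v * quot_node T v} := [set p |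
  if val p.1 == v then
    [&& val p.2 != v, rv, val p.2 \in O.1 & [forall y in Av, (y, val p.2) \in O.2]]
  else if val p.2 == v then
    [&& rv, val p.1 \in O.1 & [forall y in Av, (val p.1, y) \in O.2]]
  else (val p.1, val p.2) \in O.2].
Definition Oq : attack_t (quot_node T v) := (O1q, O2q).

Lemma reach_wit x : reaches T O x -> exists2 y, y \in O.1 & desc T x y.
Proof.
have nonleaf u : ty T u <> BAS -> exists w, w \in ch T u.
  case: wfT => _ _ _ H; case e: (ch T u) => [|w s]; last by exists w; rewrite mem_head.
  by move/H: e.
elim => {x}.
- by move=> x _ xA; exists x => //; exact: connect0.
- move=> x w _ wch _ [y yA dy]; exists y => //.
  have ex : edge T x w by [].
  exact: connect_trans (connect1 ex) dy.
- move=> x tx _ IH; case: (nonleaf x) => [|w wch]; first by rewrite tx.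
  case: (IH w wch) => y yA dy; exists y => //.
  have ex : edge T x w by [].
  exact: connect_trans (connect1 ex) dy.
- move=> x tx _ IH _; case: (nonleaf x) => [|w wch]; first by rewrite tx.
  case: (IH w wch) => y yA dy; exists y => //.
  have ex : edge T x w by [].
  exact: connect_trans (connect1 ex) dy.
Qed.

Lemma Av_wit : rv -> exists y, y \in Av.
Proof.
move/asboolP/reach_wit => [y yA dy]; exists y; by rewrite inE yA dy.
Qed.

Lemma attack_q : is_attack (quotdat T v) Oq.
Proof.
case: attO => hA hP hirr htr.
split.
- move=> a; rewrite /= inE /=; case: ifP => // _; exact: hA.
- move=> a b; rewrite /= !inE.
  case: (eqVneq (val a) v) => av; case: (eqVneq (val b) v) => bv //=.
  + by case/and3P => -> ->.
  + by case/and3P => -> -> _.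
  + exact: hP.
- move=> a; rewrite /= inE; case: (eqVneq (val a) v) => av //=; exact: hirr.
- move=> a b c; rewrite /= !inE.
  case: (eqVneq (val a) v) => av; case: (eqVneq (val b) v) => bv;
    case: (eqVneq (val c) v) => cv //=.
  + case/and3P => r _ /forall_inP H1 /and3P [_ _ /forall_inP H2].
    case: (Av_wit r) => y yAv.
    by move: (htr _ _ _ (H1 _ yAv) (H2 _ yAv)); rewrite (negbTE (hirr y)).
  + case/and3P => r bA /forall_inP H1 Hbc.
    rewrite r /=; case/andP: (hP _ _ Hbc) => _ -> /=.
    by apply/forall_inP => y yAv; exact: htr (H1 _ yAv) Hbc.
  + case/and3P => r aA /forall_inP H1 /and3P [_ _ /forall_inP H2].
    case: (Av_wit r) => y yAv; exact: htr (H1 _ yAv) (H2 _ yAv).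
  + move=> Hab /and3P [r bA /forall_inP H1].
    rewrite r /=; case/andP: (hP _ _ Hab) => -> _ /=.
    by apply/forall_inP => y yAv; exact: htr Hab (H1 _ yAv).
  + exact: htr.
Qed.

Lemma quot_edge (a b : quot_node T v) :
  edge (quotdat T v) a b -> edge T (val a) (val b).
Proof. rewrite /edge /=; case: ifP => // _; by rewrite mem_pmap_sub. Qed.

Lemma quot_desc (a b : quot_node T v) :
  desc (quotdat T v) a b -> desc T (val a) (val b).
Proof. exact: (@connect_map _ _ val (edge (quotdat T v)) (edge T) quot_edge). Qed.

Lemma quot_child x w : ~~ desc T v x -> w \in ch T x ->
  (w == v) || ~~ desc T v w.
Proof.
move=> nd wch; case: (eqVneq w v) => //= wv; apply/negP => dw.
case: modv => _ H; move: (H w x dw wv wch); by rewrite (negbTE nd).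
Qed.

Lemma inB c z : desc T c z -> z \in O.1 -> z \in Bset T c.
Proof. case: attO => hA _ _ _ dz zA; by rewrite inE dz (hA _ zA). Qed.

Lemma reach_q x : reaches T O x ->
  forall y : quot_node T v, val y = x -> reaches (quotdat T v) Oq y.
Proof.
move=> hx; move: (hx); elim: hx => {x}.
- move=> x tx xA hx y yx; apply: reaches_BAS.
    by rewrite /= yx; case: ifP.
  rewrite inE yx; case: ifP => // /eqP xv; apply/asboolP; by rewrite -xv.
- move=> x w tx wch hw IH hx y yx; case: (eqVneq x v) => [xv|xv].
    apply: reaches_BAS; first by rewrite /= yx xv eqxx.
    by rewrite inE yx xv eqxx; apply/asboolP; rewrite -xv.
  have nd : ~~ desc T v x by move: (valP y); rewrite yx (negbTE xv).
  apply: (reaches_OR (w := Sub w (quot_child nd wch))).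
  + by rewrite /= yx (negbTE xv).
  + by rewrite /= yx (negbTE xv) mem_pmap_sub SubK.
  + by apply: IH hw _ _; rewrite SubK.
- move=> x tx hw IH hx y yx; case: (eqVneq x v) => [xv|xv].
    apply: reaches_BAS; first by rewrite /= yx xv eqxx.
    by rewrite inE yx xv eqxx; apply/asboolP; rewrite -xv.
  apply: reaches_AND; first by rewrite /= yx (negbTE xv).
  move=> w'; rewrite /= yx (negbTE xv) mem_pmap_sub => w'ch.
  exact: IH w'ch (hw _ w'ch) w' erefl.
- move=> x tx hw IH Hs hx y yx; case: (eqVneq x v) => [xv|xv].
    apply: reaches_BAS; first by rewrite /= yx xv eqxx.
    by rewrite inE yx xv eqxx; apply/asboolP; rewrite -xv.
  have nd : ~~ desc T v x by move: (valP y); rewrite yx (negbTE xv).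
  have allch : all (fun w => (w == v) || ~~ desc T v w) (ch T x).
    by apply/allP => w; exact: quot_child nd.
  have mv := map_val_pmap (quot_node T v) allch.
  apply: reaches_SAND; first by rewrite /= yx (negbTE xv).
    move=> w'; rewrite /= yx (negbTE xv) mem_pmap_sub => w'ch.
    exact: IH w'ch (hw _ w'ch) w' erefl.
  case: attO => hA hP hirr htr.
  move=> i; rewrite /= yx (negbTE xv) => hi a a' aA a'A aB a'B.
  have hs : size (pmap insub (ch T x) : seq (quot_node T v)) = size (ch T x).
    by rewrite -(size_map val) mv.
  have nthv j : j < size (ch T x) ->
      val (nth y (pmap insub (ch T x)) j) = nth x (ch T x) j.
    move=> hj; rewrite -(nth_map y x); last by rewrite hs.
    by rewrite mv.
  have hi0 : i < size (ch T x) by rewrite -hs; exact: ltnW.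
  have hi1 : i.+1 < size (ch T x) by rewrite -hs.
  move: aB a'B; rewrite !inE => /andP[/quot_desc da _] /andP[/quot_desc da' _].
  rewrite (nthv _ hi0) in da; rewrite (nthv _ hi1) in da'.
  move: aA a'A; rewrite !inE.
  case: (eqVneq (val a) v) => av; case: (eqVneq (val a') v) => a'v //= aA a'A.
  + case: (Av_wit aA) => z; rewrite inE => /andP[zA dz].
    rewrite av in da; rewrite a'v in da'.
    have := Hs i hi1 z z zA zA (inB (connect_trans da dz) zA)
       (inB (connect_trans da' dz) zA).
    by rewrite (negbTE (hirr z)).
  + rewrite aA a'A /=; apply/forall_inP => z; rewrite inE => /andP[zA dz].
    rewrite av in da.
    exact: (Hs i hi1 _ _ zA a'A (inB (connect_trans da dz) zA) (inB da' a'A)).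
  + rewrite a'A aA /=; apply/forall_inP => z; rewrite inE => /andP[zA dz].
    rewrite a'v in da'.
    exact: (Hs i hi1 _ _ aA zA (inB da aA) (inB (connect_trans da' dz) zA)).
  + exact: (Hs i hi1 _ _ aA a'A (inB da aA) (inB da' a'A)).
Qed.


Lemma root_q : val (insubd (vtilde T v) (Defs.root T)) = Defs.root T.
Proof.
rewrite insubdK //; case: (eqVneq (Defs.root T) v) => [e|rvn].
  by rewrite unfold_in /= e eqxx.
rewrite unfold_in /= (negbTE rvn) /=; apply/negP => dvr.
case: wfT => acyc _ rooted _; case: (desc_step (rooted v) rvn) => w wch dwv.
by move: (acyc _ _ wch); rewrite /desc (connect_trans dwv dvr).
Qed.

Lemma succ_q : reaches T O (Defs.root T) -> successful (quotdat T v) Oq.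
Proof. move=> H; split; [exact: attack_q | exact: reach_q H _ root_q]. Qed.

Definition Osub : attack_t (sub_node T v) :=
  ([set x | val x \in O.1], [set p | (val p.1, val p.2) \in O.2]).

Lemma attack_sub : is_attack (subdat T v) Osub.
Proof.
case: attO => hA hP hirr htr; split.
- move=> a; rewrite /= inE; exact: hA.
- move=> a b; rewrite /= !inE; exact: hP.
- move=> a; rewrite /= inE; exact: hirr.
- move=> a b c; rewrite /= !inE; exact: htr.
Qed.

Lemma sub_edge (a b : sub_node T v) :
  edge (subdat T v) a b -> edge T (val a) (val b).
Proof. by rewrite /edge /= mem_pmap_sub. Qed.

Lemma sub_desc (a b : sub_node T v) :
  desc (subdat T v) a b -> desc T (val a) (val b).
Proof. exact: (@connect_map _ _ val (edge (subdat T v)) (edge T) sub_edge). Qed.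

Lemma reach_sub x : reaches T O x ->
  forall y : sub_node T v, val y = x -> reaches (subdat T v) Osub y.
Proof.
have chd (y : sub_node T v) w : w \in ch T (val y) -> desc T v w.
  move=> wch; have ex : edge T (val y) w by [].
  exact: connect_trans (valP y) (connect1 ex).
elim => {x}.
- move=> x tx xA y yx; apply: reaches_BAS; by rewrite /= ?inE yx.
- move=> x w tx wch hw IH y yx.
  have wch' : w \in ch T (val y) by rewrite yx.
  apply: (reaches_OR (w := Sub w (chd _ _ wch'))).
  + by rewrite /= yx.
  + by rewrite /= mem_pmap_sub SubK.
  + by apply: IH; rewrite SubK.
- move=> x tx hw IH y yx.
  apply: reaches_AND; first by rewrite /= yx.
  move=> w'; rewrite /= mem_pmap_sub yx => w'ch.
  exact: IH w'ch w' erefl.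
- move=> x tx hw IH Hs y yx.
  have allch : all (desc T v) (ch T x).
    by apply/allP => w; rewrite -yx; exact: chd.
  have mv := map_val_pmap (sub_node T v) allch.
  apply: reaches_SAND; first by rewrite /= yx.
    move=> w'; rewrite /= mem_pmap_sub yx => w'ch.
    exact: IH w'ch w' erefl.
  case: attO => hA hP hirr htr.
  move=> i; rewrite /= yx => hi a a' aA a'A aB a'B.
  have hs : size (pmap insub (ch T x) : seq (sub_node T v)) = size (ch T x).
    by rewrite -(size_map val) mv.
  have nthv j : j < size (ch T x) ->
      val (nth y (pmap insub (ch T x)) j) = nth x (ch T x) j.
    move=> hj; rewrite -(nth_map y x); last by rewrite hs.
    by rewrite mv.
  have hi0 : i < size (ch T x) by rewrite -hs; exact: ltnW.
  have hi1 : i.+1 < size (ch T x) by rewrite -hs.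
  move: aB a'B; rewrite !inE => /andP[/sub_desc da _] /andP[/sub_desc da' _].
  rewrite (nthv _ hi0) in da; rewrite (nthv _ hi1) in da'.
  move: aA a'A; rewrite !inE => aA a'A.
  exact: (Hs i hi1 _ _ aA a'A (inB da aA) (inB da' a'A)).
Qed.

Lemma succ_sub : reaches T O v -> successful (subdat T v) Osub.
Proof. move=> H; split; [exact: attack_sub | apply: (reach_sub H)]. reflexivity. Qed.


Lemma time_q (R : realType) (d : N -> R) :
  (forall a, ty T a = BAS -> (0 <= d a)%R) ->
  (time Oq (dquot T v d) <= time O (fun a => (d a)%:E))%E.
Proof.
move=> dpos; have [hA hP hirr htr] := attO.
have dA a : a \in O.1 -> (0 <= d a)%R by move=> /hA; exact: dpos.
set TO := time O _.
rewrite /time; apply: bigmax_le => [|C' hC']; first exact: leNye.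
move: hC' => /andP[/andP[/subsetP sC' /forall_inP cC'] _].
set vt := vtilde T v.
have valvt (a : quot_node T v) : (val a == v) = (a == vt).
  apply/eqP/eqP => [e|->//]; exact: val_inj.
have cmpC a b : a \in C' -> b \in C' -> a != b -> ((a, b) \in O2q) || ((b, a) \in O2q).
  move=> aC bC ab; move: (cC' a aC) => /forall_inP /(_ b bC) /implyP; exact.
case: (boolP (vt \in C')) => hv; last first.
  have nv a : a \in C' -> val a != v.
    by move=> aC; rewrite valvt; apply: contraNneq hv => <-.
  rewrite (eq_bigr (fun a => (d (val a))%:E)); last first.
    by move=> a aC; rewrite /dquot (negbTE (nv _ aC)).
  rewrite sumEFin.
  rewrite (_ : (\sum_(a in C') d (val a) = \sum_(x in val @: C') d x)%R); last first.
    by rewrite big_imset //; move=> x y _ _; exact: val_inj.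
  apply: chain_le_time => //; apply/andP; split.
    apply/subsetP => x /imsetP [a aC ->].
    by move: (sC' a aC); rewrite inE (negbTE (nv _ aC)).
  apply/forall_inP => x /imsetP[a aC ->]; apply/forall_inP => y /imsetP[b bC ->].
  apply/implyP => ab.
  have ab' : a != b by apply: contraNneq ab => ->.
  by move: (cmpC a b aC bC ab'); rewrite !inE /= (negbTE (nv _ aC)) (negbTE (nv _ bC)).
have rv1 : reaches T O v.
  by move: (sC' vt hv); rewrite inE /= eqxx => /asboolP.
rewrite (bigD1 vt) //= /dquot /= eqxx.
rewrite (eq_bigr (fun a => (d (val a))%:E)); last first.
  by move=> a /andP[aC av]; rewrite valvt (negbTE av).
rewrite sumEFin.
set r := (\sum_(i in C' | i != vt) d (val i))%R.
set dsub := (fun y : sub_node T v => (d (val y))%:E).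
apply: le_trans (leeD2r _ (_ : mintime (subdat T v) dsub <= time Osub dsub)%E) _.
  by apply: bigmin_le_cond; apply/asboolP; exact: succ_sub.
rewrite -leeBrDr // /time; apply: bigmax_le => [|Cs hCs]; first exact: leNye.
rewrite leeBrDr // /dsub sumEFin -EFinD.
move: hCs => /andP[/andP[/subsetP sCs /forall_inP cCs] _].
set C1 := [set a in C' | a != vt].
have C1v a : a \in C1 -> val a != v by rewrite inE valvt => /andP[].
have C1nd a : a \in C1 -> ~~ desc T v (val a).
  by move=> aC; move: (valP a) (C1v _ aC) => /orP[->|].
have Csd (a : sub_node T v) : desc T v (val a) := valP a.
have Cscmp (a : sub_node T v) b : a \in Cs -> b \in C1 ->
    ((val a, val b) \in O.2) || ((val b, val a) \in O.2).
  move=> aC bC; have bC' : b \in C' by move: bC; rewrite inE => /andP[].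
  have vb : vt != b by rewrite eq_sym -valvt C1v.
  have aAv : val a \in Av by move: (sCs _ aC); rewrite !inE => ->; rewrite Csd.
  move: (cmpC vt b hv bC' vb); rewrite !inE /= eqxx (negbTE (C1v _ bC)) /=.
  case/orP => [/and3P[_ _ /forall_inP H]|/and3P[_ _ /forall_inP H]].
    by rewrite H.
  by rewrite H ?orbT.
rewrite (_ : (\sum_(a in Cs) d (val a) + r = \sum_(x in val @: Cs :|: val @: C1) d x)%R); last first.
  rewrite (eq_bigl [predU val @: Cs & val @: C1]); last by move=> x; rewrite !inE.
  rewrite bigU; last first.
    apply/pred0P => x /=; apply/negP => /andP[/imsetP[a aC ->] /imsetP[b bC e]].
    case/negP: (C1nd _ bC); have e2 : val b = val a by exact: (esym e).
    rewrite e2; exact: Csd.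
  rewrite !big_imset //; try by move=> x y _ _; exact: val_inj.
  by congr (_ + _)%R; rewrite /r; apply: eq_bigl => x; rewrite inE.
apply: chain_le_time => //; apply/andP; split.
  apply/subsetP => x; rewrite inE => /orP[/imsetP [a aC ->]|/imsetP [a aC ->]].
    by move: (sCs a aC); rewrite inE.
  move: aC; rewrite inE => /andP[aC av].
  by move: (sC' a aC); rewrite inE valvt (negbTE av).
apply/forall_inP => x; rewrite inE => /orP[/imsetP [a aC ->]|/imsetP [a aC ->]];
  apply/forall_inP => y; rewrite inE => /orP[/imsetP [b bC ->]|/imsetP [b bC ->]];
  apply/implyP => ab.
- have ab' : a != b by apply: contraNneq ab => ->.
  by move: (cCs a aC) => /forall_inP /(_ b bC) /implyP /(_ ab'); rewrite !inE.
- exact: Cscmp.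
- by rewrite orbC; exact: Cscmp.
- have ab' : a != b by apply: contraNneq ab => ->.
  have aC' : a \in C' by move: aC; rewrite inE => /andP[].
  have bC' : b \in C' by move: bC; rewrite inE => /andP[].
  by move: (cmpC a b aC' bC' ab'); rewrite !inE /= (negbTE (C1v _ aC)) (negbTE (C1v _ bC)).
Qed.

End Main.

Theorem mainTheorem11 (R : realType) (N : finType) (T : dat N) (d : N -> R)
    (v : N) :
  wf_dat T ->
  (forall a, ty T a = BAS -> (0 <= d a)%R) ->
  is_module T v ->
  forall O : attack_t N, successful T O ->
  exists O' : attack_t (quot_node T v),
    successful (quotdat T v) O' /\
    (time O' (dquot T v d) <= time O (fun a => (d a)%:E))%E.
Proof.
move=> wfT dpos modv O [attO rO].
exists (Oq T v O); split.
  exact: succ_q.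
exact: time_q.
Qed.
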